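(* Let $N$ be a sub-sound pWF net, $M$ a sub-sound tWF net whose node set is disjoint from that of $N$, and $t^*$ a transition of $N$. Then the pWF net $N\otimes_{t^*}M$ is sub-sound.
   Context: Petri nets and markings. A Petri net is a triple $(P,T,F)$ with $P$ a finite set of places, $T$ a finite set of transitions, $P\cap T=\emptyset$, and $F\subseteq (P\times T)\cup(T\times P)$. For a node $x$, $\bullet x=\{y\mid (y,x)\in F\}$, $x\bullet=\{y\mid (x,y)\in F\}$. A marking is a multiset over $P$ (a function $P\to\mathbb N$); sets of places are identified with bags of multiplicity one, $+,-,\le$ are pointwise, and $k.m$ is the sum of $k$ copies of $m$. Transition $t$ is enabled at $m$ iff $\bullet t\le m$, firing gives $m-\bullet t+t\bullet$, and $m\xrightarrow{*}m'$ denotes reachability by a finite (possibly empty) firing sequence. Workflow nets. A pWF net is $(P,T,F,I,O)$ with $(P,T,F)$ a Petri net, $I,O\subseteq P$ non-empty, every node reachable by a directed path from some node of $I$, and some node of $O$ reachable from every node. A tWF net is the same with $I,O$ non-empty subsets of $T$. Input nodes may have incoming edges and output nodes outgoing edges. The place-completion $\mathrm{pc}(N)$ of a tWF net $N=(P,T,F,I,O)$ is obtained by adding two fresh places $p_i,p_o$ with edges $(p_i,t)$ for all $t\in I$ and $(t,p_o)$ for all $t\in O$, and taking input set $\{p_i\}$ and output set $\{p_o\}$. Sub-soundness. A pWF net is sub-sound if for all integers $k\ge k'\ge 0$ and every marking $m'$: if $k.I\xrightarrow{*}m'+k'.O$ then $m'\xrightarrow{*}(k-k').O$. A tWF net is sub-sound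 iff its place-completion is. Transition substitution. For a WF net $N=(P,T,F,I,O)$ and a tWF net $M=(P',T',F',I',O')$ with disjoint node sets and $t\in T$, $N\otimes_t M$ is obtained from $N$ by deleting $t$ and all edges incident to $t$, adding all nodes and edges of $M$, adding an edge $(q,t')$ for each $q\in\bullet_N t$ and $t'\in I'$, and an edge $(t',q)$ for each $t'\in O'$ and $q\in t\bullet_N$; its input set is $(I\setminus\{t\})\cup I'$ if $t\in I$ and $I$ otherwise, and its output set is $(O\setminus\{t\})\cup O'$ if $t\in O$ and $O$ otherwise. *)

(* Defs.v *)
From mathcomp Require Import all_boot.
From Stdlib Require Import Relations.
Set Implicit Arguments. Unset Strict Implicit. Unset Printing Implicit Defensive.

(* A net (P,T,F,I,O) whose nodes live in a finite ambient type V.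
   Whether I,O are sets of places (pWF) or transitions (tWF) is imposed by
   the well-formedness predicates below. *)
Record net (V : finType) := Net {
  places : {set V};
  trans  : {set V};
  flow   : {set V * V};
  inp    : {set V};
  outp   : {set V}
}.

Section NetDefs.
Variable V : finType.
Implicit Types (N : net V).

Definition nodes N : {set V} := places N :|: trans N.
Definition flowrel N : rel V := fun x y => (x, y) \in flow N.
Definition preset N (x : V) : {set V} := [set y | (y, x) \in flow N].
Definition postset N (x : V) : {set V} := [set y | (x, y) \in flow N].

Definition is_petri_net N : Prop :=
  [disjoint places N & trans N] /\
  (forall x y, (x, y) \in flow N ->
     (x \in places N /\ y \in trans N) \/ (x \in trans N /\ y \in places N)).

Definition wf_common N : Prop :=
  is_petri_net N /\ inp N != set0 /\ outp N != set0 /\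
  (forall x, x \in nodes N -> exists2 i, i \in inp N & connect (flowrel N) i x) /\
  (forall x, x \in nodes N -> exists2 o, o \in outp N & connect (flowrel N) x o).

Definition pWF N : Prop :=
  wf_common N /\ inp N \subset places N /\ outp N \subset places N.
Definition tWF N : Prop :=
  wf_common N /\ inp N \subset trans N /\ outp N \subset trans N.

(* Markings: multisets of nodes (functions V -> nat); only places ever carry
   tokens in reachable markings. *)
Definition marking := V -> nat.
Definition mset (A : {set V}) : marking := fun v => nat_of_bool (v \in A).
Definition madd (m1 m2 : marking) : marking := fun v => m1 v + m2 v.
Definition mscale (k : nat) (m : marking) : marking := fun v => k * m v.

Definition enabled N (t : V) (m : marking) : Prop :=
  forall p, mset (preset N t) p <= m p.
Definition fire N (t : V) (m : marking) : marking :=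
  fun p => m p - mset (preset N t) p + mset (postset N t) p.
Definition step N (m m' : marking) : Prop :=
  exists2 t, t \in trans N & enabled N t m /\ m' = fire N t m.
Definition reach N : relation marking := clos_refl_trans marking (step N).

Definition subsound N : Prop :=
  forall (k k' : nat) (m' : marking), k' <= k ->
    reach N (mscale k (mset (inp N))) (madd m' (mscale k' (mset (outp N)))) ->
    reach N m' (mscale (k - k') (mset (outp N))).

End NetDefs.

(* Place completion of a tWF net: nodes in V + bool, with inr false = p_i and
   inr true = p_o the two fresh places. *)
Definition pc (V : finType) (M : net V) : net (V + bool)%type :=
  {| places := (inl @: places M) :|: [set inr false; inr true];
     trans  := inl @: trans M;
     flow   := [set (inl e.1, inl e.2) | e in flow M]
               :|: [set (inr false, inl t) | t in inp M]
               :|: [set (inl t, inr true) | t in outp M];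
     inp    := [set inr false];
     outp   := [set inr true] |}.

Definition tsubsound (V : finType) (M : net V) : Prop := subsound (pc M).

Definition subst_net (V : finType) (N : net V) (t : V) (M : net V) : net V :=
  {| places := places N :|: places M;
     trans  := (trans N :\ t) :|: trans M;
     flow   := [set e in flow N | (e.1 != t) && (e.2 != t)]
               :|: flow M
               :|: [set (q, t') | q in preset N t, t' in inp M]
               :|: [set (t', q) | t' in outp M, q in postset N t];
     inp    := if t \in inp N then (inp N :\ t) :|: inp M else inp N;
     outp   := if t \in outp N then (outp N :\ t) :|: outp M else outp N |}.

(* Main.v *)
Require Import Defs.
From mathcomp Require Import all_boot.
From Stdlib Require Import Relations FunctionalExtensionality.
From mathcomp Require Import zify.
Set Implicit Arguments. Unset Strict Implicit. Unset Printing Implicit Defensive.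

Lemma fext (W : Type) (f g : W -> nat) : (forall v, f v = g v) -> f = g.
Proof. exact: functional_extensionality. Qed.

Lemma reach_refl (W : finType) (N : net W) x : reach N x x.
Proof. exact: rt_refl. Qed.
Lemma reach_trans (W : finType) (N : net W) x y z :
  reach N x y -> reach N y z -> reach N x z.
Proof. exact: rt_trans. Qed.
Lemma reach_step (W : finType) (N : net W) x y : step N x y -> reach N x y.
Proof. exact: rt_step. Qed.

Lemma step_add (W : finType) (N : net W) x y z :
  step N x y -> step N (madd x z) (madd y z).
Proof.
case=> u uT [en ->]; exists u => //; split.
  by move=> p; have := en p; rewrite /madd; lia.
apply: fext => p; have := en p; rewrite /madd /fire; lia.
Qed.

Lemma reach_add (W : finType) (N : net W) x y z :
  reach N x y -> reach N (madd x z) (madd y z).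
Proof.
elim=> [a b /step_add h|a|a b c _ h1 _ h2]; first exact: reach_step.
  exact: reach_refl.
exact: reach_trans h1 h2.
Qed.

Lemma reach_ind_inv (W : finType) (N : net W) (P : marking W -> Prop) x y :
  P x -> (forall a b, P a -> step N a b -> P b) -> reach N x y -> P y.
Proof.
move=> Px IH /clos_rt_rtn1_iff h; elim: h => // a b st _ Pa; exact: IH Pa st.
Qed.

Lemma reach_map (W1 W2 : finType) (N1 : net W1) (N2 : net W2) (f : marking W1 -> marking W2) x y :
  (forall a b, step N1 a b -> step N2 (f a) (f b)) -> reach N1 x y -> reach N2 (f x) (f y).
Proof.
move=> H; elim=> [a b /H h|a|a b c _ h1 _ h2]; first exact: reach_step.
  exact: reach_refl.
exact: reach_trans h1 h2.
Qed.

Lemma petri_flow (W : finType) (N : net W) x y :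
  is_petri_net N -> (x, y) \in flow N -> x \in nodes N /\ y \in nodes N.
Proof.
case=> _ h /h; rewrite /nodes !inE => -[[-> ->]|[-> ->]]; rewrite ?orbT //.
Qed.

Lemma pre_nodes (W : finType) (N : net W) x v :
  is_petri_net N -> v \in preset N x -> v \in nodes N.
Proof. by move=> h; rewrite inE => /(petri_flow h) []. Qed.
Lemma post_nodes (W : finType) (N : net W) x v :
  is_petri_net N -> v \in postset N x -> v \in nodes N.
Proof. by move=> h; rewrite inE => /(petri_flow h) []. Qed.

Lemma pt_disj (W : finType) (N : net W) x :
  is_petri_net N -> x \in places N -> x \in trans N -> False.
Proof. by case=> /disjointFr h _ /h ->. Qed.

Lemma preS_M (V : finType) (N M : net V) t u v :
  is_petri_net N -> is_petri_net M -> [disjoint nodes N & nodes M] -> u \in nodes M ->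
  (v \in preset (subst_net N t M) u) =
  (v \in preset M u) || ((u \in inp M) && (v \in preset N t)).
Proof.
move=> pN pM hd uM; rewrite !inE /=.
have -> : ((v, u) \in flow N) = false.
  apply/negP => /(petri_flow pN) [_ uN]; by rewrite (disjointFr hd uN) in uM.
have -> : ((v, u) \in [set (t', q) | t' in outp M, q in postset N t]) = false.
  apply/negP => /imset2P [a q _ qP [e1 e2]]; subst.
  have := post_nodes pN qP => uN; by rewrite (disjointFr hd uN) in uM.
rewrite /= orbF; congr (_ || _).
apply/imset2P/andP => [[q a qP aI [e1 e2]]|[aI qP]]; first by subst; move: qP; rewrite inE aI => ->.
by exists v u => //; rewrite inE.
Qed.

Lemma postS_M (V : finType) (N M : net V) t u v :
  is_petri_net N -> is_petri_net M -> [disjoint nodes N & nodes M] -> u \in nodes M ->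
  (v \in postset (subst_net N t M) u) =
  (v \in postset M u) || ((u \in outp M) && (v \in postset N t)).
Proof.
move=> pN pM hd uM; rewrite !inE /=.
have -> : ((u, v) \in flow N) = false.
  apply/negP => /(petri_flow pN) [uN _]; by rewrite (disjointFr hd uN) in uM.
have -> : ((u, v) \in [set (q, t') | q in preset N t, t' in inp M]) = false.
  apply/negP => /imset2P [q a qP _ [e1 e2]]; subst.
  have := pre_nodes pN qP => uN; by rewrite (disjointFr hd uN) in uM.
rewrite /= orbF; congr (_ || _).
apply/imset2P/andP => [[a q aI qP [e1 e2]]|[aI qP]]; first by subst; move: qP; rewrite inE aI => ->.
by exists u v => //; rewrite inE.
Qed.

Lemma preS_N (V : finType) (N M : net V) t u v :
  is_petri_net N -> tWF M -> [disjoint nodes N & nodes M] ->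
  u \in trans N -> t \in trans N ->
  (v \in preset (subst_net N t M) u) = (v \in preset N u) && (u != t).
Proof.
move=> pN [[pM _] [hI hO]] hd uT tT.
have uN : u \in nodes N by rewrite !inE uT orbT.
have uM : (u \in nodes M) = false by rewrite (disjointFr hd uN).
rewrite !inE /=.
have -> : ((v, u) \in flow M) = false.
  apply/negP => /(petri_flow pM) [_ h]; by rewrite h in uM.
have -> : ((v, u) \in [set (q, t') | q in preset N t, t' in inp M]) = false.
  apply/negP => /imset2P [q a _ aI [_ e2]]; rewrite -e2 in aI.
  have : u \in nodes M by rewrite !inE (subsetP hI _ aI) orbT.
  by rewrite uM.
have -> : ((v, u) \in [set (t', q) | t' in outp M, q in postset N t]) = false.
  apply/negP => /imset2P [a q _ qP [_ e2]]; rewrite -e2 in qP.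
  move: qP; rewrite inE => /(proj2 pN) [[tP _]|[_ h]].
    exact: pt_disj pN tP tT.
  exact: pt_disj pN h uT.
rewrite !orbF; case e: ((v, u) \in flow N) => //=.
have vt : v != t.
  apply/eqP => vt; subst v; case: (proj2 pN _ _ e) => [[h _]|[_ h]].
    exact: pt_disj pN h tT.
  exact: pt_disj pN h uT.
by rewrite vt.
Qed.

Lemma postS_N (V : finType) (N M : net V) t u v :
  is_petri_net N -> tWF M -> [disjoint nodes N & nodes M] ->
  u \in trans N -> t \in trans N ->
  (v \in postset (subst_net N t M) u) = (v \in postset N u) && (u != t).
Proof.
move=> pN [[pM _] [hI hO]] hd uT tT.
have uN : u \in nodes N by rewrite !inE uT orbT.
have uM : (u \in nodes M) = false by rewrite (disjointFr hd uN).
rewrite !inE /=.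
have -> : ((u, v) \in flow M) = false.
  apply/negP => /(petri_flow pM) [h _]; by rewrite h in uM.
have -> : ((u, v) \in [set (t', q) | t' in outp M, q in postset N t]) = false.
  apply/negP => /imset2P [a q aO _ [e1 _]]; rewrite -e1 in aO.
  have : u \in nodes M by rewrite !inE (subsetP hO _ aO) orbT.
  by rewrite uM.
have -> : ((u, v) \in [set (q, t') | q in preset N t, t' in inp M]) = false.
  apply/negP => /imset2P [q a qP _ [e1 _]]; rewrite -e1 in qP.
  move: qP; rewrite inE => /(proj2 pN) [[h _]|[_ h]].
    exact: pt_disj pN h uT.
  exact: pt_disj pN h tT.
rewrite !orbF; case e: ((u, v) \in flow N) => //=.
have vt : v != t.
  apply/eqP => vt; subst v; case: (proj2 pN _ _ e) => [[h _]|[_ h]].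
    exact: pt_disj pN h uT.
  exact: pt_disj pN h tT.
by rewrite vt andbT.
Qed.
Lemma flowPC (V : finType) (M : net V) x y :
  ((x, y) \in flow (pc M)) =
  match x, y with
  | inl a, inl b => (a, b) \in flow M
  | inr false, inl b => b \in inp M
  | inl a, inr true => a \in outp M
  | _, _ => false end.
Proof.
rewrite /= !inE.
case: x => [a|[]]; case: y => [b|[]] /=; apply/idP/idP; try done; try apply/negP;
  try (case/orP => [/orP [|]|] /imsetP [c cin E]; case: E => *; subst => //; by case: c cin);
try (by move=> h; rewrite (imset_f (fun e : V * V => (inl e.1, inl e.2) : (V + bool) * (V + bool)) h));
try (by move=> h; rewrite (imset_f (fun t0 : V => (inl t0, inr true) : (V + bool) * (V + bool)) h) orbT);
try (by move=> h; rewrite (imset_f (fun t0 : V => (inr false, inl t0) : (V + bool) * (V + bool)) h) orbT).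
Qed.

Lemma in_pre (W : finType) (N : net W) x y : (y \in preset N x) = ((y, x) \in flow N).
Proof. by rewrite inE. Qed.
Lemma in_post (W : finType) (N : net W) x y : (y \in postset N x) = ((x, y) \in flow N).
Proof. by rewrite inE. Qed.
Lemma prePC_l (V : finType) (M : net V) u v :
  (inl v \in preset (pc M) (inl u)) = (v \in preset M u).
Proof. by rewrite !in_pre; exact: flowPC. Qed.
Lemma prePC_f (V : finType) (M : net V) u :
  (inr false \in preset (pc M) (inl u)) = (u \in inp M).
Proof. by rewrite !in_pre; exact: flowPC. Qed.
Lemma prePC_t (V : finType) (M : net V) x :
  (inr true \in preset (pc M) x) = false.
Proof. by rewrite !in_pre; case: x => [|[]] *; exact: flowPC. Qed.
Lemma postPC_l (V : finType) (M : net V) u v :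
  (inl v \in postset (pc M) (inl u)) = (v \in postset M u).
Proof. by rewrite !in_post; exact: flowPC. Qed.
Lemma postPC_t (V : finType) (M : net V) u :
  (inr true \in postset (pc M) (inl u)) = (u \in outp M).
Proof. by rewrite !in_post; exact: flowPC. Qed.
Lemma postPC_f (V : finType) (M : net V) x :
  (inr false \in postset (pc M) x) = false.
Proof. by rewrite !in_post; case: x => [|[]] *; exact: flowPC. Qed.
Lemma transPC (V : finType) (M : net V) x :
  x \in trans (pc M) -> exists2 u, x = inl u & u \in trans M.
Proof. by case/imsetP => u uT ->; exists u. Qed.

Definition Tr (V : finType) (N : net V) (t : V) (b : marking V) (x : marking (V + bool)%type) : marking V :=
  fun v => b v + x (inl v) + x (inr true) * mset (postset N t) v
           + x (inr false) * mset (preset N t) v.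

Lemma disj_pre (V : finType) (N M : net V) u t p :
  is_petri_net N -> is_petri_net M -> [disjoint nodes N & nodes M] ->
  ~~ ((p \in preset M u) && (p \in preset N t)).
Proof.
move=> pN pM hd; apply/negP => /andP [/(pre_nodes pM) h1 /(pre_nodes pN) h2].
by rewrite (disjointFr hd h2) in h1.
Qed.
Lemma disj_post (V : finType) (N M : net V) u t p :
  is_petri_net N -> is_petri_net M -> [disjoint nodes N & nodes M] ->
  ~~ ((p \in postset M u) && (p \in postset N t)).
Proof.
move=> pN pM hd; apply/negP => /andP [/(post_nodes pM) h1 /(post_nodes pN) h2].
by rewrite (disjointFr hd h2) in h1.
Qed.

Lemma Tr_step (V : finType) (N M : net V) t b x y :
  is_petri_net N -> is_petri_net M -> [disjoint nodes N & nodes M] ->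
  step (pc M) x y -> step (subst_net N t M) (Tr N t b x) (Tr N t b y).
Proof.
move=> pN pM hd [z zT [en ->]]; case: (transPC zT) => u zu uT; subst z.
have uM : u \in nodes M by rewrite !inE uT orbT.
exists u; first by rewrite /= !inE uT orbT.
split.
  move=> p; have := en (inl p); have := en (inr false).
  rewrite /Tr /mset (preS_M t p pN pM hd uM) prePC_l prePC_f.
  move: (p \in preset M u) (u \in inp M) (p \in preset N t) => [] [] [] /=; lia.
apply: fext => p; have := en (inl p); have := en (inr false).
have := disj_pre u t p pN pM hd; have := disj_post u t p pN pM hd.
rewrite /Tr /fire /mset (preS_M t p pN pM hd uM) (postS_M t p pN pM hd uM)
  prePC_l prePC_f postPC_l postPC_f prePC_t postPC_t.
move: (p \in preset M u) (u \in inp M) (p \in preset N t)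
      (p \in postset M u) (u \in outp M) (p \in postset N t) => [] [] [] [] [] [] /=; lia.
Qed.

Lemma Tr_reach (V : finType) (N M : net V) t b x y :
  is_petri_net N -> is_petri_net M -> [disjoint nodes N & nodes M] ->
  reach (pc M) x y -> reach (subst_net N t M) (Tr N t b x) (Tr N t b y).
Proof. move=> pN pM hd; apply: reach_map => a c; exact: Tr_step. Qed.

Lemma M_run (V : finType) (M : net V) :
  tsubsound M ->
  reach (pc M) (mscale 1 (mset (inp (pc M)))) (mscale 1 (mset (outp (pc M)))).
Proof.
move=> hs; have := hs 1 0 (mscale 1 (mset (inp (pc M)))) (leq0n 1).
rewrite subn0; apply.
have -> : madd (mscale 1 (mset (inp (pc M)))) (mscale 0 (mset (outp (pc M))))
          = mscale 1 (mset (inp (pc M))).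
  by apply: fext => z; rewrite /madd /mscale mul0n addn0.
exact: reach_refl.
Qed.

Lemma lift_step (V : finType) (N M : net V) t x y :
  pWF N -> tWF M -> tsubsound M -> [disjoint nodes N & nodes M] -> t \in trans N ->
  step N x y -> reach (subst_net N t M) x y.
Proof.
move=> hN hM hs hd tT [u uT [en ->]].
have pN := hN.1.1; have pM := hM.1.1.
case: (eqVneq u t) => [eut|ut]; first subst u.
  have := Tr_reach t (fun p => x p - mset (preset N t) p) pN pM hd (M_run hs).
  have -> : Tr N t (fun p => x p - mset (preset N t) p) (mscale 1 (mset (inp (pc M)))) = x.
    apply: fext => p; have := en p; rewrite /Tr /mscale /mset /= !in_set1 /=.
    move: (p \in preset N t) => [] /=; lia.
  have -> : Tr N t (fun p => x p - mset (preset N t) p) (mscale 1 (mset (outp (pc M)))) = fire N t x.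
    apply: fext => p; have := en p; rewrite /Tr /fire /mscale /mset /= !in_set1 /=.
    move: (p \in preset N t) (p \in postset N t) => [] [] /=; lia.
  by [].
apply: reach_step; exists u; first by rewrite /= !inE ut uT.
split.
  by move=> p; rewrite /mset (preS_N p pN hM hd uT tT) ut andbT; exact: en.
apply: fext => p.
by rewrite /fire /mset (preS_N p pN hM hd uT tT) (postS_N p pN hM hd uT tT) ut !andbT.
Qed.

Lemma lift_reach (V : finType) (N M : net V) t x y :
  pWF N -> tWF M -> tsubsound M -> [disjoint nodes N & nodes M] -> t \in trans N ->
  reach N x y -> reach (subst_net N t M) x y.
Proof.
move=> hN hM hs hd tT; elim=> [a b|a|a b c _ h1 _ h2].
- exact: lift_step.
- exact: reach_refl.
- exact: reach_trans h1 h2.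
Qed.

Definition restrN (V : finType) (M : net V) (m : marking V) : marking V :=
  fun v => if v \in nodes M then 0 else m v.
Definition emb (V : finType) (M : net V) (m : marking V) (b : nat) : marking (V + bool)%type :=
  fun z => match z with
           | inl v => if v \in nodes M then m v else 0
           | inr true => b
           | inr false => 0 end.

Definition Inv (V : finType) (N M : net V) t k m : Prop :=
  exists a b, b <= a /\
    reach (pc M) (mscale a (mset (inp (pc M)))) (emb M m b) /\
    reach N (mscale k (mset (inp N))) (madd (restrN M m) (mscale (a - b) (mset (postset N t)))).

Lemma po_mono (V : finType) (M : net V) x y :
  reach (pc M) x y -> x (inr true) <= y (inr true).
Proof.
elim=> [a c [z _ [_ ->]]|a|a c d _ h1 _ h2].
- by rewrite /fire /mset prePC_t /=; lia.
- by [].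
- exact: leq_trans h1 h2.
Qed.

Lemma ba_le (V : finType) (M : net V) a b m :
  tsubsound M -> reach (pc M) (mscale a (mset (inp (pc M)))) (emb M m b) -> b <= a.
Proof.
move=> hs h; case: (leqP b a) => // ab.
have := hs a a (emb M m (b - a)) (leqnn a).
have -> : madd (emb M m (b - a)) (mscale a (mset (outp (pc M)))) = emb M m b.
  apply: fext => -[v|[]]; rewrite /madd /mscale /mset /= !in_set1 /=; lia.
move=> /(_ h) /po_mono; rewrite /mscale /mset /= !in_set1 /=; lia.
Qed.

Lemma notin_of (V : finType) (A B : {set V}) p :
  [disjoint A & B] -> (p \in A) ==> (p \notin B).
Proof. by move=> hd; apply/implyP => /(disjointFr hd) ->. Qed.

Lemma inv_stepN (V : finType) (N M : net V) t k m u :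
  pWF N -> tWF M -> [disjoint nodes N & nodes M] -> t \in trans N ->
  u \in trans N -> u != t ->
  enabled (subst_net N t M) u m ->
  Inv N M t k m -> Inv N M t k (fire (subst_net N t M) u m).
Proof.
move=> hN hM hd tT uT ut en [a [b [ba [hA hB]]]].
have pN := hN.1.1; have pM := hM.1.1.
have npre p : (p \in preset N u) ==> (p \notin nodes M).
  by apply/implyP => /(pre_nodes pN) /(disjointFr hd) ->.
have npost p : (p \in postset N u) ==> (p \notin nodes M).
  by apply/implyP => /(post_nodes pN) /(disjointFr hd) ->.
exists a, b; split => //; split.
  have -> : emb M (fire (subst_net N t M) u m) b = emb M m b.
    apply: fext => -[v|[]] //=.
    have := npre v; have := npost v.
    rewrite /fire /mset (preS_N v pN hM hd uT tT) (postS_N v pN hM hd uT tT) ut !andbT.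
    move: (v \in nodes M) (v \in preset N u) (v \in postset N u) => [] [] [] //=; lia.
  exact: hA.
apply: (reach_trans hB); apply: reach_step; exists u => //; split.
  move=> p; have := en p; have := npre p.
  rewrite /madd /restrN /mscale /mset (preS_N p pN hM hd uT tT) ut !andbT.
  move: (p \in nodes M) (p \in preset N u) => [] [] //=; lia.
apply: fext => p; have := en p; have := npre p; have := npost p.
rewrite /madd /restrN /mscale /fire /mset (preS_N p pN hM hd uT tT) (postS_N p pN hM hd uT tT) ut !andbT.
move: (p \in nodes M) (p \in preset N u) (p \in postset N u) => [] [] [] //=; lia.
Qed.

Lemma inv_stepM (V : finType) (N M : net V) t k m u :
  pWF N -> tWF M -> tsubsound M -> [disjoint nodes N & nodes M] -> t \in trans N ->
  u \in trans M ->
  enabled (subst_net N t M) u m ->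
  Inv N M t k m -> Inv N M t k (fire (subst_net N t M) u m).
Proof.
move=> hN hM hs hd tT uT en [a [b [ba [hA hB]]]].
have pN := hN.1.1; have pM := hM.1.1.
have uM : u \in nodes M by rewrite !inE uT orbT.
have h1 p : (p \in preset M u) ==> (p \in nodes M).
  by apply/implyP => /(pre_nodes pM).
have h2 p : (p \in postset M u) ==> (p \in nodes M).
  by apply/implyP => /(post_nodes pM).
have h3 p : (p \in preset N t) ==> (p \notin nodes M).
  by apply/implyP => /(pre_nodes pN) /(disjointFr hd) ->.
have h4 p : (p \in postset N t) ==> (p \notin nodes M).
  by apply/implyP => /(post_nodes pN) /(disjointFr hd) ->.
set m' := fire (subst_net N t M) u m.
set c : nat := u \in inp M. set d : nat := u \in outp M.
have hA' : reach (pc M) (mscale (a + c) (mset (inp (pc M)))) (emb M m' (b + d)).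
  have -> : mscale (a + c) (mset (inp (pc M)))
          = madd (mscale a (mset (inp (pc M)))) (mscale c (mset (inp (pc M)))).
    by apply: fext => z; rewrite /madd /mscale mulnDl.
  apply: (reach_trans (reach_add _ hA)); apply: reach_step.
  exists (inl u); first exact: imset_f.
  split.
    move=> -[p|[]]; rewrite /mset /madd /mscale ?prePC_l ?prePC_f ?prePC_t /= ?in_set1 /=.
    + have := en p; have := h1 p.
      rewrite /mset (preS_M t p pN pM hd uM).
      move: (p \in nodes M) (p \in preset M u) => [] [] //=; lia.
    + by rewrite /c /d; lia.
    + by rewrite /c /d; lia.
  apply: fext => -[p|[]]; rewrite /fire /mset /madd /mscale ?prePC_l ?prePC_f ?prePC_t
     ?postPC_l ?postPC_f ?postPC_t /= ?in_set1 /=.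
  + rewrite /m' /fire /mset (preS_M t p pN pM hd uM) (postS_M t p pN pM hd uM).
    have := en p; have := h1 p; have := h2 p; have := h3 p; have := h4 p.
    rewrite /mset (preS_M t p pN pM hd uM).
    move: (p \in nodes M) (p \in preset M u) (p \in postset M u) (u \in inp M)
          (u \in outp M) (p \in preset N t) (p \in postset N t) => [] [] [] [] [] [] [] //=; lia.
  + by rewrite /c /d; lia.
  + by rewrite /c /d; lia.
have ba' := ba_le hs hA'.
exists (a + c), (b + d); split => //; split => //.
move: ba'; rewrite /c /d; case hc: (u \in inp M) => /= ba'.
  apply: (reach_trans hB); apply: reach_step; exists t => //; split.
    move=> p; have := en p; have := h3 p.
    rewrite /madd /restrN /mscale /mset (preS_M t p pN pM hd uM) hc.
    move: (p \in nodes M) (p \in preset M u) (p \in preset N t) => [] [] [] //=; lia.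
  apply: fext => p; have := en p; have := h1 p; have := h2 p; have := h3 p; have := h4 p.
  rewrite /m' /madd /restrN /mscale /fire /mset (preS_M t p pN pM hd uM) (postS_M t p pN pM hd uM) hc.
  move: ba'; move: (p \in nodes M) (p \in preset M u) (p \in postset M u)
        (u \in outp M) (p \in preset N t) (p \in postset N t) => [] [] [] [] [] [] //=; lia.
suff -> : madd (restrN M m') (mscale (a + 0 - (b + d)) (mset (postset N t)))
        = madd (restrN M m) (mscale (a - b) (mset (postset N t))) by [].
apply: fext => p; have := en p; have := h1 p; have := h2 p; have := h3 p; have := h4 p.
rewrite /m' /madd /restrN /mscale /fire /mset (preS_M t p pN pM hd uM) (postS_M t p pN pM hd uM) hc.
move: ba' ba; rewrite /d; move: (p \in nodes M) (p \in preset M u) (p \in postset M u)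
      (u \in outp M) (p \in preset N t) (p \in postset N t) => [] [] [] [] [] [] //=; lia.
Qed.

Theorem mainTheorem13 (V : finType) (N M : net V) (tstar : V) :
  pWF N -> subsound N ->
  tWF M -> tsubsound M ->
  [disjoint nodes N & nodes M] ->
  tstar \in trans N ->
  subsound (subst_net N tstar M).
Proof.
move=> hN sN hM hs hd tT k k' m' hk hreach.
have pN := hN.1.1; have pM := hM.1.1.
have inM v : v \in places N -> (v \in nodes M) = false.
  by move=> vP; apply: (disjointFr hd); rewrite !inE vP.
have tI : (tstar \in inp N) = false.
  by apply/negP => /(subsetP hN.2.1) h; exact: pt_disj pN h tT.
have tO : (tstar \in outp N) = false.
  by apply/negP => /(subsetP hN.2.2) h; exact: pt_disj pN h tT.
have eI : inp (subst_net N tstar M) = inp N by rewrite /= tI.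
have eO : outp (subst_net N tstar M) = outp N by rewrite /= tO.
rewrite eI in hreach; rewrite eO in hreach *.
have inI v : (v \in inp N) ==> (v \notin nodes M).
  by apply/implyP => /(subsetP hN.2.1) /inM ->.
have inO v : (v \in outp N) ==> (v \notin nodes M).
  by apply/implyP => /(subsetP hN.2.2) /inM ->.
have hInv : Inv N M tstar k (madd m' (mscale k' (mset (outp N)))).
  apply: (reach_ind_inv _ _ hreach).
    exists 0, 0; split => //; split.
      have -> : emb M (mscale k (mset (inp N))) 0 = mscale 0 (mset (inp (pc M))).
        apply: fext => -[v|[]] //=; rewrite /mscale /mset mul0n; have := inI v.
        by move: (v \in nodes M) (v \in inp N) => [] [] //= _; rewrite muln0.
      exact: reach_refl.
    have -> : madd (restrN M (mscale k (mset (inp N)))) (mscale (0 - 0) (mset (postset N tstar)))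
              = mscale k (mset (inp N)).
      apply: fext => v; rewrite /madd /restrN /mscale /mset; have := inI v.
      by move: (v \in nodes M) (v \in inp N) => [] [] /= h; try discriminate; lia.
    exact: reach_refl.
  move=> a b Pa [u uT [en ->]]; move: uT; rewrite /= !inE => /orP [/andP [ut uTN]|uTM].
    exact: inv_stepN.
  exact: inv_stepM.
case: hInv => a [b [ba [hA hB]]].
have hA2 : reach (pc M) (emb M m' 0) (mscale (a - b) (mset (outp (pc M)))).
  apply: (hs a b _ ba).
  have <- : emb M (madd m' (mscale k' (mset (outp N)))) b
            = madd (emb M m' 0) (mscale b (mset (outp (pc M)))).
    apply: fext => -[v|[]]; rewrite /madd /mscale /mset /= ?in_set1 /=; try lia.
    have := inO v; move: (v \in nodes M) (v \in outp N) => [] [] /= h; try discriminate; lia.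
  exact: hA.
have hB2 : reach N (madd (restrN M m') (mscale (a - b) (mset (postset N tstar))))
                   (mscale (k - k') (mset (outp N))).
  apply: (sN k k' _ hk).
  have <- : madd (restrN M (madd m' (mscale k' (mset (outp N))))) (mscale (a - b) (mset (postset N tstar)))
          = madd (madd (restrN M m') (mscale (a - b) (mset (postset N tstar)))) (mscale k' (mset (outp N))).
    apply: fext => v; rewrite /madd /restrN /mscale /mset; have := inO v.
    move: (v \in nodes M) (v \in outp N) => [] [] /= h; try discriminate; lia.
  exact: hB.
have := Tr_reach tstar (restrN M m') pN pM hd hA2.
have -> : Tr N tstar (restrN M m') (emb M m' 0) = m'.
  apply: fext => p; rewrite /Tr /restrN /=; case: (p \in nodes M); lia.
have -> : Tr N tstar (restrN M m') (mscale (a - b) (mset (outp (pc M))))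
          = madd (restrN M m') (mscale (a - b) (mset (postset N tstar))).
  apply: fext => p; rewrite /Tr /madd /mscale /mset /= !in_set1 /=; lia.
move=> h; apply: (reach_trans h); exact: lift_reach hB2.
Qed.
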